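(* Let $G=(V,E)$ be a complete bipartite graph with $V=V_1\cup V_2$, $V_1\cap V_2=\emptyset$, $V_1,V_2\neq\emptyset$, and $E=\{\{i,j\}: i\in V_1,\ j\in V_2\}$. Let $c\in\mathbb{R}^{|V|}$ have strictly positive components and $\rho>0$. Then there exist strictly positive edge weights such that the weighted adjacency matrix $A$ satisfies $Ac=\rho c$ if and only if $\sum_{j\in V_1}c_j^2=\sum_{j\in V_2}c_j^2$.
   Context: For positive edge weights $w_{ij}=w_{ji}$ ($\{i,j\}\in E$), the weighted adjacency matrix $A$ has $a_{ij}=w_{ij}$ if $\{i,j\}\in E$ and $a_{ij}=0$ otherwise. *)

(* Defs.v *)
From mathcomp Require Import all_boot all_order all_algebra.
Set Implicit Arguments. Unset Strict Implicit. Unset Printing Implicit Defensive.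
Import Order.TTheory GRing.Theory Num.Theory.
Local Open Scope ring_scope.

(* Complete bipartite graph on vertex set 'I_n with parts V1 and its
   complement V2 = ~: V1: {i,j} is an edge iff exactly one endpoint is in V1. *)
Definition cb_edge (n : nat) (V1 : {set 'I_n}) (i j : 'I_n) : bool :=
  ((i \in V1) && (j \notin V1)) || ((i \notin V1) && (j \in V1)).

Definition pos_sym_weights (R : numDomainType) (n : nat) (e : rel 'I_n)
  (w : 'I_n -> 'I_n -> R) : Prop :=
  (forall i j, e i j -> w i j = w j i) /\ (forall i j, e i j -> 0 < w i j).

Definition wadj (R : numDomainType) (n : nat) (e : rel 'I_n)
  (w : 'I_n -> 'I_n -> R) : 'M[R]_n :=
  \matrix_(i, j) (if e i j then w i j else 0).

(* Main.v *)
Require Import Defs.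
From mathcomp Require Import all_boot all_order all_algebra.
From mathcomp Require Import ring.
Set Warnings "-all".
Import Order.TTheory GRing.Theory Num.Theory.
Local Open Scope ring_scope.

Lemma adj_in (R : realFieldType) (n : nat) (V1 : {set 'I_n}) w (c : 'cV[R]_n) i :
  i \in V1 -> (wadj (cb_edge V1) w *m c) i 0 = \sum_(j in ~: V1) w i j * c j 0.
Proof.
move=> Hi; rewrite mxE [RHS]big_mkcond; apply: eq_bigr => j _.
by rewrite mxE /cb_edge Hi /= in_setC; case: (j \in V1) => //=; rewrite mul0r.
Qed.

Lemma adj_out (R : realFieldType) (n : nat) (V1 : {set 'I_n}) w (c : 'cV[R]_n) i :
  i \notin V1 -> (wadj (cb_edge V1) w *m c) i 0 = \sum_(j in V1) w i j * c j 0.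
Proof.
move=> Hi; rewrite mxE [RHS]big_mkcond; apply: eq_bigr => j _.
by rewrite mxE /cb_edge (negbTE Hi) /=; case: (j \in V1) => //=; rewrite mul0r.
Qed.

Theorem mainTheorem3 (R : realFieldType) (n : nat) (V1 : {set 'I_n})
  (hV1 : V1 != set0) (hV2 : ~: V1 != set0)
  (c : 'cV[R]_n) (hc : forall i, 0 < c i 0) (rho : R) (hrho : 0 < rho) :
  (exists w : 'I_n -> 'I_n -> R,
     pos_sym_weights (cb_edge V1) w /\
     wadj (cb_edge V1) w *m c = rho *: c)
  <->
  \sum_(j in V1) c j 0 ^+ 2 = \sum_(j in ~: V1) c j 0 ^+ 2.
Proof.
split.
- move=> [w [[Hsym Hpos] Heq]].
  have E1 : \sum_(i in V1) c i 0 * (wadj (cb_edge V1) w *m c) i 0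
            = rho * \sum_(j in V1) c j 0 ^+ 2.
    rewrite mulr_sumr; apply: eq_bigr => i _.
    by rewrite Heq mxE mulrCA expr2.
  have E2 : \sum_(i in ~: V1) c i 0 * (wadj (cb_edge V1) w *m c) i 0
            = rho * \sum_(j in ~: V1) c j 0 ^+ 2.
    rewrite mulr_sumr; apply: eq_bigr => i _.
    by rewrite Heq mxE mulrCA expr2.
  have E3 : \sum_(i in V1) c i 0 * (wadj (cb_edge V1) w *m c) i 0 =
            \sum_(i in ~: V1) c i 0 * (wadj (cb_edge V1) w *m c) i 0.
    rewrite (eq_bigr (fun i => \sum_(j in ~: V1) c i 0 * (w i j * c j 0))); last first.
      by move=> i Hi; rewrite adj_in // mulr_sumr.
    rewrite [RHS](eq_bigr (fun i => \sum_(j in V1) c i 0 * (w i j * c j 0))); last first.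
      by move=> i; rewrite in_setC => Hi; rewrite adj_out // mulr_sumr.
    rewrite exchange_big /=; apply: eq_bigr => j Hj; apply: eq_bigr => i Hi.
    rewrite in_setC in Hj.
    rewrite Hsym; last by rewrite /cb_edge Hi Hj.
    by rewrite mulrCA [RHS]mulrCA [c i 0 * _]mulrC.
  have : rho * \sum_(j in V1) c j 0 ^+ 2 = rho * \sum_(j in ~: V1) c j 0 ^+ 2.
    by rewrite -E1 -E2.
  by apply: mulfI; rewrite gt_eqF.
- move=> HS.
  set S := \sum_(j in V1) c j 0 ^+ 2.
  have Spos : 0 < S.
    case/set0Pn: hV1 => k Hk.
    rewrite /S (bigD1 k) //=; apply: ltr_pwDl.
      by rewrite exprn_gt0.
    by apply: sumr_ge0 => i _; rewrite sqr_ge0.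
  exists (fun i j => rho * c i 0 * c j 0 / S); split; first split.
  + by move=> i j _; rewrite -!mulrA [c i 0 * _]mulrCA.
  + move=> i j _; apply: divr_gt0 => //; apply: mulr_gt0 => //; exact: mulr_gt0.
  + apply/matrixP => i k; rewrite (ord1 k) [RHS]mxE.
    case Hi: (i \in V1).
    * rewrite adj_in //.
      rewrite (eq_bigr (fun j => (rho * c i 0 / S) * c j 0 ^+ 2)); last first.
        by move=> j _; rewrite expr2; field; rewrite gt_eqF.
      by rewrite -mulr_sumr -HS /S; field; rewrite gt_eqF.
    * rewrite adj_out ?Hi //.
      rewrite (eq_bigr (fun j => (rho * c i 0 / S) * c j 0 ^+ 2)); last first.
        by move=> j _; rewrite expr2; field; rewrite gt_eqF.
      by rewrite -mulr_sumr /S; field; rewrite gt_eqF.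
Qed.
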